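(* Let $\mathbb{K}$ be a field and $n\geq 2$. If $\mathbb{K}$ has characteristic not $2$, every range-compatible group homomorphism $F:\mathrm{S}_n(\mathbb{K})\to\mathbb{K}^n$ is local. If $\mathbb{K}$ has characteristic $2$, the range-compatible group homomorphisms $F:\mathrm{S}_n(\mathbb{K})\to\mathbb{K}^n$ are exactly the maps of the form $$M\longmapsto MX+\begin{bmatrix}\alpha(m_{1,1}) & \alpha(m_{2,2}) & \cdots & \alpha(m_{n,n})\end{bmatrix}^T$$ with $X\in\mathbb{K}^n$ and $\alpha$ a root-linear form on $\mathbb{K}$ (in particular every such map with $X=0$ is range-compatible). Moreover, if $\mathbb{K}$ has more than $2$ elements, every range-compatible linear map on $\mathrm{S}_n(\mathbb{K})$ is local.
   Context: $\mathrm{S}_n(\mathbb{K})$ is the space of $n\times n$ symmetric matrices over $\mathbb{K}$; $m_{i,j}$ is the $(i,j)$ entry of $M$. A map $F:\mathcal{S}\to\mathbb{K}^n$ on a set of $n\times p$ matrices is range-compatible when $F(M)\in\operatorname{im}M$ for all $M$, and local when there is $X\in\mathbb{K}^p$ with $F(M)=MX$ for all $M$. In characteristic $2$, a map $\alpha:\mathbb{K}\to\mathbb{K}$ is a root-linear form when it is additive and $\alpha(\lambda^2x)=\lambda\alpha(x)$ for all $\lambda,x\in\mathbb{K}$. *)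

(* Defs.v *)
From HB Require Import structures.
From mathcomp Require Import all_boot all_order all_algebra.
Set Implicit Arguments. Unset Strict Implicit. Unset Printing Implicit Defensive.
Import GRing.Theory.
Local Open Scope ring_scope.

(* Maps S_n(K) -> K^n are represented as functions 'M[K]_n -> 'cV[K]_n whose
   values outside S_n(K) are irrelevant: all hypotheses and conclusions below
   only mention symmetric arguments. *)
Definition symmetric_mx (K : fieldType) (n : nat) (M : 'M[K]_n) : Prop :=
  M^T = M.

Definition additive_on_sym (K : fieldType) (n : nat)
    (F : 'M[K]_n -> 'cV[K]_n) : Prop :=
  forall A B : 'M[K]_n, symmetric_mx A -> symmetric_mx B -> F (A + B) = F A + F B.

Definition linear_on_sym (K : fieldType) (n : nat)
    (F : 'M[K]_n -> 'cV[K]_n) : Prop :=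
  additive_on_sym F /\
  forall (a : K) (A : 'M[K]_n), symmetric_mx A -> F (a *: A) = a *: F A.

Definition range_compatible_sym (K : fieldType) (n : nat)
    (F : 'M[K]_n -> 'cV[K]_n) : Prop :=
  forall M : 'M[K]_n, symmetric_mx M -> exists Y : 'cV[K]_n, F M = M *m Y.

Definition local_sym (K : fieldType) (n : nat)
    (F : 'M[K]_n -> 'cV[K]_n) : Prop :=
  exists X : 'cV[K]_n, forall M : 'M[K]_n, symmetric_mx M -> F M = M *m X.

Definition root_linear (K : fieldType) (alpha : K -> K) : Prop :=
  (forall x y : K, alpha (x + y) = alpha x + alpha y) /\
  (forall lam x : K, alpha (lam ^+ 2 * x) = lam * alpha x).

(* Main.v *)
Require Import Defs.
From mathcomp Require Import all_boot all_order all_algebra.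
From mathcomp Require Import ring.
Set Implicit Arguments. Unset Strict Implicit. Unset Printing Implicit Defensive.
Import GRing.Theory.
Local Open Scope ring_scope.

Section Basic.
Variables (K : fieldType) (m : nat).
Local Notation n := m.+2.

Definition ev (i : 'I_n) : 'cV[K]_n := delta_mx i ord0.
Definition Dm (i : 'I_n) : 'M[K]_n := ev i *m (ev i)^T.
Definition Sm (i j : 'I_n) : 'M[K]_n := ev i *m (ev j)^T + ev j *m (ev i)^T.

Lemma evE i p : ev i p ord0 = (p == i)%:R.
Proof. by rewrite /ev mxE eqxx andbT. Qed.

Lemma colmul (u : 'cV[K]_n) (w : 'M[K]_1) p : (u *m w) p ord0 = u p ord0 * w ord0 ord0.
Proof. by rewrite !mxE big_ord1. Qed.

Lemma outerE (u v : 'cV[K]_n) p q : (u *m v^T) p q = u p ord0 * v q ord0.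
Proof. by rewrite !mxE big_ord1 mxE. Qed.

Lemma eTX (X : 'cV[K]_n) j : ((ev j)^T *m X) ord0 ord0 = X j ord0.
Proof.
rewrite mxE (bigD1 j) //= big1 ?addr0; first by rewrite mxE evE eqxx mul1r.
by move=> k /negbTE hk; rewrite mxE evE hk mul0r.
Qed.

Lemma Sm_sym i j : Sm i j = Sm j i.
Proof. by rewrite /Sm addrC. Qed.

Lemma sym0 : symmetric_mx (0 : 'M[K]_n).
Proof. by rewrite /symmetric_mx trmx0. Qed.
Lemma symD (A B : 'M[K]_n) : symmetric_mx A -> symmetric_mx B -> symmetric_mx (A + B).
Proof. by rewrite /symmetric_mx linearD /= => -> ->. Qed.
Lemma symZ (a : K) (A : 'M[K]_n) : symmetric_mx A -> symmetric_mx (a *: A).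
Proof. by rewrite /symmetric_mx linearZ /= => ->. Qed.
Lemma symO (u : 'cV[K]_n) : symmetric_mx (u *m u^T).
Proof. by rewrite /symmetric_mx trmx_mul trmxK. Qed.
Lemma symDm i : symmetric_mx (Dm i). Proof. exact: symO. Qed.
Lemma symSm i j : symmetric_mx (Sm i j).
Proof. by rewrite /symmetric_mx /Sm linearD /= !trmx_mul !trmxK addrC. Qed.

Variable F : 'M[K]_n -> 'cV[K]_n.
Hypothesis hadd : additive_on_sym F.
Hypothesis hrc : range_compatible_sym F.

Lemma F0 : F 0 = 0.
Proof.
have := hadd sym0 sym0; rewrite addr0 => /(congr1 (fun x => x - F 0)).
by rewrite subrr addrK.
Qed.

Lemma F_sum (I : Type) (r : seq I) (P : pred I) (A : I -> 'M[K]_n) :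
  (forall i, P i -> symmetric_mx (A i)) ->
  symmetric_mx (\sum_(i <- r | P i) A i) /\
  F (\sum_(i <- r | P i) A i) = \sum_(i <- r | P i) F (A i).
Proof.
move=> hA; elim: r => [|x r [IH1 IH2]]; first by rewrite !big_nil F0; split => //; exact: sym0.
rewrite !big_cons; case: ifP => // Px; split; first exact: symD (hA _ Px) IH1.
by rewrite hadd ?IH2 //; exact: hA.
Qed.

Lemma rc_outer (u : 'cV[K]_n) (r : 'rV[K]_n) :
  symmetric_mx (u *m r) -> exists c, forall p, F (u *m r) p ord0 = u p ord0 * c.
Proof.
move=> /hrc [Y ->]; exists ((r *m Y) ord0 ord0) => p.
by rewrite -mulmxA colmul.
Qed.


Definition f i a := F (a *: Dm i) i ord0.
Definition s i j b := F (b *: Sm i j) i ord0.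

Lemma L1 i a p : p != i -> F (a *: Dm i) p ord0 = 0.
Proof.
move=> hp; have -> : a *: Dm i = ev i *m (a *: (ev i)^T) by rewrite /Dm scalemxAr.
have hs : symmetric_mx (ev i *m (a *: (ev i)^T)) by rewrite -scalemxAr; apply/symZ/symDm.
have [c ->] := rc_outer hs.
by rewrite evE (negbTE hp) mul0r.
Qed.

Lemma L2 i j b p : p != i -> p != j -> F (b *: Sm i j) p ord0 = 0.
Proof.
move=> hpi hpj; have [Y ->] := hrc (symZ b (symSm i j)).
rewrite -scalemxAl /Sm mulmxDl -!mulmxA mxE [X in b * X]mxE !colmul !evE.
by rewrite (negbTE hpi) (negbTE hpj) !mul0r addr0 mulr0.
Qed.

Lemma f_add i a b : f i (a + b) = f i a + f i b.
Proof. by rewrite /f scalerDl hadd ?mxE //; apply/symZ/symDm. Qed.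
Lemma s_add i j a b : s i j (a + b) = s i j a + s i j b.
Proof. by rewrite /s scalerDl hadd ?mxE //; apply/symZ/symSm. Qed.

Lemma s_symE i j b : F (b *: Sm i j) j ord0 = s j i b.
Proof. by rewrite /s Sm_sym. Qed.

Lemma E_rel i j lam t : i != j ->
  s j i (lam * t) + f j (lam * t ^+ 2) = t * (f i lam + s i j (lam * t)).
Proof.
move=> hij.
pose u := ev i + t *: ev j.
have hM : u *m (lam *: u^T) = lam *: Dm i + (lam * t) *: Sm i j + (lam * t ^+ 2) *: Dm j.
  apply/matrixP => p q; rewrite /u /Dm /Sm !(mxE, big_ord1) !eqxx !andbT; ring.
have hs : symmetric_mx (u *m (lam *: u^T)) by rewrite -scalemxAr; apply/symZ/symO.
have [c hc] := rc_outer hs.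
have hsy1 : symmetric_mx (lam *: Dm i) by apply/symZ/symDm.
have hsy2 : symmetric_mx ((lam * t) *: Sm i j) by apply/symZ/symSm.
have hsy3 : symmetric_mx ((lam * t ^+ 2) *: Dm j) by apply/symZ/symDm.
have hF : F (u *m (lam *: u^T)) = F (lam *: Dm i) + F ((lam * t) *: Sm i j) + F ((lam * t ^+ 2) *: Dm j).
  by rewrite hM hadd ?hadd //; apply: symD.
have hi := hc i; have hj := hc j.
rewrite hF !mxE in hi hj.
have hji : (j == i) = false by rewrite eq_sym (negbTE hij).
rewrite !eqxx !andbT (negbTE hij) hji in hi hj.
rewrite (@L1 j _ i hij) in hi.
rewrite (@L1 i _ j (negbT hji)) in hj.
rewrite s_symE in hj.
rewrite -/(f i lam) -/(s i j (lam * t)) -/(f j (lam * t ^+ 2)) in hi hj.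
rewrite add0r in hj; rewrite hj.
rewrite addr0 mulr0 addr0 mul1r in hi; rewrite hi /=; ring.
Qed.


Lemma R1_alg (A Pt P1 Qt Q1 Bt2 Bt B1 t : K) :
  Qt + Q1 + (Bt2 + (Bt + (Bt + B1))) = (t + 1) * (A + (Pt + P1)) ->
  Qt + Bt2 = t * (A + Pt) ->
  Q1 + B1 = A + P1 ->
  Bt + Bt = t * P1 + Pt.
Proof.
move=> e1 e0 e2; apply: subr0_eq.
have -> : Bt + Bt - (t * P1 + Pt) =
  (Qt + Q1 + (Bt2 + (Bt + (Bt + B1))) - (t + 1) * (A + (Pt + P1)))
  - (Qt + Bt2 - t * (A + Pt)) - (Q1 + B1 - (A + P1)) by ring.
by rewrite e1 e0 e2 !subrr.
Qed.

Lemma R1 i j lam t : i != j ->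
  f j (lam * t) + f j (lam * t) = t * s i j lam + s i j (lam * t).
Proof.
move=> hij.
have e1 := E_rel lam (t + 1) hij; have e0 := E_rel lam t hij; have e2 := E_rel lam 1 hij.
rewrite expr1n !mulr1 mul1r in e2.
rewrite (_ : lam * (t + 1) ^+ 2 = lam * t ^+ 2 + (lam * t + (lam * t + lam))) in e1; last by ring.
rewrite (_ : lam * (t + 1) = lam * t + lam) in e1; last by ring.
rewrite !f_add !s_add in e1.
exact: (R1_alg e1 e0 e2).
Qed.

Lemma Plin i j lam : i != j -> s i j lam = lam * s i j 1.
Proof.
move=> hij; have h1 := R1 lam 1 hij; have h2 := R1 1 lam hij.
rewrite !mulr1 !mul1r in h1 h2.
by move: h2; rewrite h1 => /addIr.
Qed.

Definition al i j mu := f j mu - mu * s i j 1.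

Lemma al_rel i j lam t : i != j -> al i j (lam * t ^+ 2) = t * al j i lam.
Proof.
move=> hij; have e := E_rel lam t hij.
have hji : j != i by rewrite eq_sym.
rewrite (Plin _ hij) (Plin _ hji) in e.
rewrite /al; move: e; set Q := s j i 1; set P := s i j 1; set A := f i lam; set B := f j _.
move=> e; apply: subr0_eq.
have -> : B - lam * t ^+ 2 * P - t * (A - lam * Q) =
  lam * t * Q + B - t * (A + lam * t * P) by ring.
by rewrite e subrr.
Qed.

Lemma al_sym i j mu : i != j -> al i j mu = al j i mu.
Proof. by move=> hij; have := al_rel mu 1 hij; rewrite expr1n !mulr1 mul1r. Qed.


Lemma FDmE i a p : F (a *: Dm i) p ord0 = if p == i then f i a else 0.
Proof. by case: eqP => [->|/eqP hp]; [done | rewrite L1]. Qed.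

Lemma FSmE i j b p : i != j ->
  F (b *: Sm i j) p ord0 = if p == i then s i j b else if p == j then s j i b else 0.
Proof.
move=> hij; case: eqP => [->|/eqP hpi] //; case: eqP => [->|/eqP hpj]; first exact: s_symE.
exact: L2.
Qed.

Lemma three_alg (fi fk sij sik ski skj c : K) :
  fi + sij + sik = c -> fk + ski + skj = c -> fi - ski = fk - sik -> sij = skj.
Proof.
move=> h1 h2 h3; apply: subr0_eq.
have -> : sij - skj = (fi + sij + sik - c) - (fk + ski + skj - c) - ((fi - ski) - (fk - sik)) by ring.
by rewrite h1 h2 h3 !subrr.
Qed.

Lemma three i j k : i != j -> i != k -> j != k -> s i j 1 = s k j 1.
Proof.
move=> hij hik hjk.
have hji : (j == i) = false by rewrite eq_sym (negbTE hij).
have hki : (k == i) = false by rewrite eq_sym (negbTE hik).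
have hkj : (k == j) = false by rewrite eq_sym (negbTE hjk).
pose u := ev i + ev j + ev k.
have hM : u *m u^T = 1 *: Dm i + 1 *: Dm j + 1 *: Dm k + 1 *: Sm i j + 1 *: Sm i k + 1 *: Sm j k.
  apply/matrixP => p q; rewrite /u /Dm /Sm !(mxE, big_ord1) !eqxx !andbT; ring.
have [c hc] := rc_outer (symO u).
have sD a x : symmetric_mx (a *: Dm x) by apply/symZ/symDm.
have sS a x y : symmetric_mx (a *: Sm x y) by apply/symZ/symSm.
have hF : F (u *m u^T) = F (1 *: Dm i) + F (1 *: Dm j) + F (1 *: Dm k) + F (1 *: Sm i j)
   + F (1 *: Sm i k) + F (1 *: Sm j k).
  rewrite hM !hadd //; repeat first [apply: symD | apply: sD | apply: sS].
have hi := hc i; have hk := hc k.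
rewrite hF !mxE !FDmE !FSmE // in hi hk.
rewrite !eqxx !andbT ?(negbTE hij) ?(negbTE hik) ?(negbTE hjk) ?hji ?hki ?hkj /= in hi hk.
rewrite !addr0 !add0r mul1r in hi hk.
have ha := al_sym 1 hik.
rewrite /al !mul1r in ha.
exact: three_alg hi hk (esym ha).
Qed.

End Basic.

Arguments ev {K m}. Arguments Dm {K m}. Arguments Sm {K m}.

Section Main.
Variables (K : fieldType) (m : nat).
Local Notation n := m.+2.

Lemma sum_delta (g : 'I_n -> K) (P : pred 'I_n) p :
  \sum_(i | P i) (p == i)%:R * g i = if P p then g p else 0.
Proof.
rewrite big_mkcond (bigD1 p) //= big1 ?addr0 => [|i hi].
  by rewrite eqxx mul1r; case: (P p).
by rewrite eq_sym (negbTE hi) mul0r; case: (P i).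
Qed.

Lemma sum_delta1 (g : 'I_n -> K) p :
  \sum_i (p == i)%:R * g i = g p.
Proof.
rewrite (bigD1 p) //= eqxx mul1r big1 ?addr0 // => i hi.
by rewrite eq_sym (negbTE hi) mul0r.
Qed.

Lemma decomp (M : 'M[K]_n) : symmetric_mx M ->
  M = \sum_(i : 'I_n) (M i i) *: Dm i + \sum_(i : 'I_n) \sum_(j : 'I_n | (i < j)%N) (M i j) *: Sm i j.
Proof.
move=> hM; apply/matrixP => p q.
rewrite mxE !summxE.
rewrite (eq_bigr (fun i => (p == i)%:R * ((q == i)%:R * M i i))); last first.
  by move=> i _; rewrite mxE outerE !evE; ring.
rewrite [X in _ + X](eq_bigr (fun i => (p == i)%:R * \sum_(j : 'I_n | (i < j)%N) (q == j)%:R * M i j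
                         + (q == i)%:R * \sum_(j : 'I_n | (i < j)%N) (p == j)%:R * M i j)); last first.
  move=> i _; rewrite summxE mulr_sumr mulr_sumr -big_split /=.
  by apply: eq_bigr => j _; rewrite mxE mxE !outerE !evE; ring.
rewrite big_split /= !sum_delta1 !sum_delta -val_eqE /=.
case: ltngtP => h.
- by rewrite mul0r add0r addr0.
- rewrite mul0r add0r add0r.
  by have := hM; rewrite /symmetric_mx => /matrixP/(_ p q); rewrite mxE.
- by rewrite mul1r !addr0 (val_inj h).
Qed.

End Main.

Lemma zmod_shuffle (V : zmodType) (x1 x2 y1 y2 z1 z2 : V) :
  x1 + x2 - (y1 + y2 + (z1 + z2)) = x1 - (y1 + z1) + (x2 - (y2 + z2)).
Proof.
by rewrite [y1 + _ + _]addrACA opprD addrACA.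
Qed.

Section Rep.
Variables (K : fieldType) (m : nat).
Local Notation n := m.+2.
Variable F : 'M[K]_n -> 'cV[K]_n.
Hypothesis hadd : additive_on_sym F.
Hypothesis hrc : range_compatible_sym F.

Definition partner (j : 'I_n) : 'I_n := if j == ord0 then ord_max else ord0.
Lemma max0 : (ord_max : 'I_n) != ord0. Proof. by rewrite -val_eqE. Qed.
Lemma partner_neq j : partner j != j.
Proof.
rewrite /partner; case: (eqVneq j ord0) => [->|h]; first exact: max0.
by rewrite eq_sym.
Qed.

Definition xv j := s F (partner j) j 1.
Definition Xv : 'cV[K]_n := \col_j xv j.

Lemma hx i j : i != j -> s F i j 1 = xv j.
Proof.
move=> hij; case: (eqVneq i (partner j)) => [->//|h].
apply: (three hadd hrc hij h); rewrite eq_sym; exact: partner_neq.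
Qed.

Definition alpha mu := f F ord0 mu - mu * xv ord0.

Lemma halpha j mu : f F j mu - mu * xv j = alpha mu.
Proof.
case: (eqVneq j ord0) => [->//|h].
have h' : ord0 != j by rewrite eq_sym.
have := al_sym hadd hrc mu h'; rewrite /al (hx h') (hx h) => ->; done.
Qed.

Lemma al_eq i j mu : i != j -> al F i j mu = alpha mu.
Proof. by move=> hij; rewrite /al hx // halpha. Qed.

Lemma alpha_add x y : alpha (x + y) = alpha x + alpha y.
Proof. rewrite /alpha f_add //; ring. Qed.

Lemma alpha0 : alpha 0 = 0.
Proof. by have := alpha_add 0 0; rewrite addr0 => /(congr1 (fun z => z - alpha 0)); rewrite subrr addrK. Qed.

Lemma alpha_rl : root_linear alpha.
Proof.
split; first exact: alpha_add.
move=> lam x; have := al_rel hadd hrc x lam max0.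
by rewrite !al_eq ?max0 1?eq_sym ?max0 // mulrC.
Qed.

Definition G M := F M - (M *m Xv + \col_i alpha (M i i)).

Lemma Gadd : additive_on_sym G.
Proof.
move=> A B hA hB; rewrite /G hadd // mulmxDl.
have -> : \col_i alpha ((A + B) i i) = \col_i alpha (A i i) + \col_i alpha (B i i).
  by apply/matrixP => p q; rewrite !mxE alpha_add.
exact: zmod_shuffle.
Qed.

Lemma DmX (a : K) (i p : 'I_n) : ((a *: Dm i) *m Xv) p ord0 = a * ((p == i)%:R * xv i).
Proof. by rewrite -scalemxAl /Dm -mulmxA mxE colmul eTX evE mxE. Qed.
Lemma SmX (b : K) (i j p : 'I_n) : ((b *: Sm i j) *m Xv) p ord0 = b * ((p == i)%:R * xv j + (p == j)%:R * xv i).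
Proof. by rewrite -scalemxAl /Sm mulmxDl -!mulmxA mxE mxE !colmul !eTX !evE !mxE. Qed.
Lemma Dmd (a : K) (i p : 'I_n) : (a *: Dm i) p p = a * ((p == i)%:R * (p == i)%:R).
Proof. by rewrite mxE /Dm outerE evE. Qed.
Lemma Smd (b : K) (i j p : 'I_n) : (b *: Sm i j) p p = b * ((p == i)%:R * (p == j)%:R + (p == j)%:R * (p == i)%:R).
Proof. by rewrite mxE /Sm mxE !outerE !evE. Qed.

Lemma Gentry M p : G M p ord0 = F M p ord0 - ((M *m Xv) p ord0 + alpha (M p p)).
Proof. by rewrite /G !mxE. Qed.

Lemma GDm (a : K) (i : 'I_n) : G (a *: Dm i) = 0.
Proof.
apply/matrixP => p q; rewrite (ord1 q) Gentry [RHS]mxE DmX Dmd FDmE //.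
case: (eqVneq p i) => [e|h] /=; rewrite ?mulr1n ?mulr0n.
  by subst p; rewrite !mul1r mulr1 -(halpha i a) [a * _ + _]addrC subrK subrr.
by rewrite !mul0r mulr0 alpha0 !addr0 subrr.
Qed.

Lemma GSm (b : K) (i j : 'I_n) : i != j -> G (b *: Sm i j) = 0.
Proof.
move=> hij; have hji : j != i by rewrite eq_sym.
apply/matrixP => p q; rewrite (ord1 q) Gentry [RHS]mxE SmX Smd FSmE //.
case: (eqVneq p i) => [e|hpi] /=.
  subst p; rewrite (negbTE hij) /= ?mulr1n ?mulr0n !mul1r !mul0r ?add0r ?addr0 !mulr0 alpha0 ?addr0.
  by rewrite Plin // hx // subrr.
case: (eqVneq p j) => [e|hpj] /=.
  subst p; rewrite ?mulr1n ?mulr0n !mul1r !mul0r !add0r ?addr0 !mulr0 alpha0 ?addr0.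
  by rewrite Plin // hx // subrr.
by rewrite ?mulr0n !mul0r !addr0 !mulr0 alpha0 addr0 subrr.
Qed.

Lemma rep M : symmetric_mx M -> F M = M *m Xv + \col_i alpha (M i i).
Proof.
move=> hM; apply: subr0_eq; rewrite -/(G M).
rewrite (decomp hM).
have s1 := F_sum Gadd (index_enum 'I_n) (P := predT) (A := fun i => M i i *: Dm i)
   (fun i _ => symZ (M i i) (@symDm K m i)).
have hin : forall i : 'I_n, predT i ->
   symmetric_mx (\sum_(j : 'I_n | (i < j)%N) M i j *: Sm i j) /\
   G (\sum_(j : 'I_n | (i < j)%N) M i j *: Sm i j) = 0.
  move=> i _.
  have [h1 h2] := F_sum Gadd (index_enum 'I_n) (P := fun j : 'I_n => (i < j)%N)
     (A := fun j => M i j *: Sm i j) (fun j _ => symZ (M i j) (@symSm K m i j)).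
  split => //; rewrite h2 big1 // => j hj; apply: GSm.
  by rewrite -val_eqE /= neq_ltn hj.
have s2 := F_sum Gadd (index_enum 'I_n) (P := predT)
   (A := fun i => \sum_(j : 'I_n | (i < j)%N) M i j *: Sm i j) (fun i hi => (hin i hi).1).
case: s1 => sy1 e1; case: s2 => sy2 e2.
rewrite Gadd // e1 e2 !big1 ?addr0 // => i _; [exact: (hin i isT).2 | exact: GDm].
Qed.

End Rep.

Lemma char2_quad (K : fieldType) (n : nat) (h2 : (2%:R : K) = 0)
  (a : 'I_n -> 'I_n -> K) (hs : forall i k, a i k = a k i) :
  \sum_i \sum_k a i k = \sum_i a i i.
Proof.
have hd i : \sum_k (if i == k then a i k else 0) = a i i.
  rewrite (bigD1 i) //= eqxx big1 ?addr0 // => k hk; by rewrite eq_sym (negbTE hk).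
rewrite (eq_bigr (fun i : 'I_n => \sum_(k : 'I_n) (if (i < k)%N then a i k else 0)
     + \sum_(k : 'I_n) (if (k < i)%N then a i k else 0) + a i i)); last first.
  move=> i _; rewrite -(hd i) -!big_split /=; apply: eq_bigr => k _.
  rewrite -val_eqE /=; case: ltngtP => h; rewrite ?addr0 ?add0r //.
rewrite !big_split /=.
have -> : \sum_(i : 'I_n) \sum_(k : 'I_n) (if (k < i)%N then a i k else 0) =
          \sum_(i : 'I_n) \sum_(k : 'I_n) (if (i < k)%N then a i k else 0).
  rewrite exchange_big /=; apply: eq_bigr => i _; apply: eq_bigr => k _; by rewrite hs.
by rewrite -mulr2n -mulr_natr h2 mulr0 add0r.
Qed.

Lemma rc_form (K : fieldType) (n : nat) (h2 : 2%N \in [pchar K]) (X : 'cV[K]_n)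
  (alpha : K -> K) (hrl : root_linear alpha) (M : 'M[K]_n) (hM : symmetric_mx M) :
  exists Y, M *m X + \col_i alpha (M i i) = M *m Y.
Proof.
have h2' : (2%:R : K) = 0 := pcharf0 h2.
case: hrl => hadd hsq.
have a0 : alpha 0 = 0.
  by have := hadd 0 0; rewrite addr0 => /(congr1 (fun z => z - alpha 0)); rewrite subrr addrK.
set d := \col_i alpha (M i i).
suff [Z hZ] : exists Z, d = M *m Z by exists (X + Z); rewrite mulmxDr hZ.
have hsub : (d^T <= M)%MS.
  rewrite submxE; apply/eqP/matrixP => r q; rewrite (ord1 r) [RHS]mxE mxE.
  set C := cokermx M.
  have hy p : \sum_k M p k * C k q = 0.
    by have := mulmx_coker M; move/matrixP/(_ p q); rewrite !mxE.
  rewrite (eq_bigr (fun i => alpha (C i q ^+ 2 * M i i))); last first.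
    by move=> i _; rewrite !mxE hsq mulrC.
  rewrite -(big_morph alpha hadd a0).
  have hq : \sum_i C i q ^+ 2 * M i i = 0.
    transitivity (\sum_i \sum_k C i q * M i k * C k q).
      rewrite (char2_quad h2'); last first.
        by move=> i k; have := hM; move/matrixP/(_ k i); rewrite mxE => ->; ring.
      by apply: eq_bigr => i _; rewrite expr2; ring.
    apply: big1 => i _.
    rewrite (eq_bigr (fun k => C i q * (M i k * C k q))); last by move=> k _; rewrite mulrA.
    by rewrite -mulr_sumr hy mulr0.
  by rewrite hq a0.
have [D hD] := submxP hsub.
exists D^T; by rewrite -[d]trmxK hD trmx_mul hM.
Qed.

Lemma only_if (K : fieldType) (m : nat) (F : 'M[K]_m.+2 -> 'cV[K]_m.+2) :
  additive_on_sym F -> range_compatible_sym F ->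
  exists (X : 'cV[K]_m.+2) (alpha : K -> K), root_linear alpha /\
    forall M : 'M[K]_m.+2, symmetric_mx M -> F M = M *m X + \col_(i < m.+2) alpha (M i i).
Proof.
move=> hadd hrc; exists (Xv F), (alpha F); split; first exact: alpha_rl.
exact: rep.
Qed.

Lemma col0_alpha (K : fieldType) (n : nat) (alpha : K -> K) (M : 'M[K]_n) :
  (forall x, alpha x = 0) -> \col_(i < n) alpha (M i i) = 0.
Proof. by move=> h; apply/matrixP => i j; rewrite !mxE h. Qed.

Lemma rl_char (K : fieldType) (alpha : K -> K) : root_linear alpha ->
  (2%:R : K) != 0 -> forall x, alpha x = 0.
Proof.
case=> _ hsq h2 x; have := hsq (-1) x; rewrite sqrrN expr1n mul1r mulN1r.
move/(congr1 (fun z => z + alpha x)); rewrite addNr => e.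
have : alpha x * 2%:R = 0 by rewrite mulr_natr mulr2n {1}e.
by move/eqP; rewrite mulf_eq0 (negbTE h2) orbF => /eqP.
Qed.

Lemma add_form (K : fieldType) (n : nat) (X : 'cV[K]_n) (alpha : K -> K) :
  (forall x y, alpha (x + y) = alpha x + alpha y) ->
  forall A B : 'M[K]_n, (A + B) *m X + \col_i alpha ((A + B) i i) =
    (A *m X + \col_i alpha (A i i)) + (B *m X + \col_i alpha (B i i)).
Proof.
move=> ha A B; rewrite mulmxDl.
have -> : \col_i alpha ((A + B) i i) = \col_i alpha (A i i) + \col_i alpha (B i i).
  by apply/matrixP => p q; rewrite !mxE ha.
by rewrite addrACA.
Qed.

Lemma lin_alpha (K : fieldType) (m : nat) (F : 'M[K]_m.+2 -> 'cV[K]_m.+2)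
  (X : 'cV[K]_m.+2) (alpha : K -> K) (hrl : root_linear alpha)
  (hF : forall M : 'M[K]_m.+2, symmetric_mx M -> F M = M *m X + \col_(i < m.+2) alpha (M i i))
  (hlin : forall (a : K) (A : 'M[K]_m.+2), symmetric_mx A -> F (a *: A) = a *: F A)
  (lam : K) (h0 : lam != 0) (h1 : lam != 1) : forall x, alpha x = 0.
Proof.
have hD := @symDm K m ord0.
have hD00 : (Dm (ord0 : 'I_m.+2) : 'M[K]_m.+2) ord0 ord0 = 1.
  by rewrite /Dm outerE evE eqxx /= mulr1n mulr1.
have key a : alpha a = a * alpha 1.
  move: (Dm (ord0 : 'I_m.+2) : 'M[K]_m.+2) hD hD00 => D hDs hD00.
  have := hlin a _ hDs; rewrite hF; last exact: symZ. rewrite hF // -scalemxAl.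
  move/matrixP/(_ ord0 ord0); rewrite !mxE hD00 mulr1 mulrDr => /addrI.
  done.
case: hrl => _ hsq.
have e := hsq lam 1; rewrite (key (lam ^+ 2 * 1)) !mulr1 in e.
have e2 : lam * (lam - 1) * alpha 1 = 0.
  by rewrite mulrBr mulr1 mulrBl -expr2 e subrr.
have a1 : alpha 1 = 0.
  move/eqP: e2; rewrite !mulf_eq0 (negbTE h0) subr_eq0 (negbTE h1) /=; by move/eqP.
by move=> x; rewrite key a1 mulr0.
Qed.

Theorem theorem1p10 (K : fieldType) (n : nat) (hn : (2 <= n)%N) :
  (~~ (2%N \in [pchar K]) ->
     forall F : 'M[K]_n -> 'cV[K]_n,
       additive_on_sym F -> range_compatible_sym F -> local_sym F)
  /\
  ((2%N \in [pchar K]) ->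
     forall F : 'M[K]_n -> 'cV[K]_n,
       (additive_on_sym F /\ range_compatible_sym F) <->
       (exists (X : 'cV[K]_n) (alpha : K -> K),
          root_linear alpha /\
          forall M : 'M[K]_n, symmetric_mx M ->
            F M = M *m X + \col_(i < n) alpha (M i i)))
  /\
  ((exists a b c : K, [/\ a != b, a != c & b != c]) ->
     forall F : 'M[K]_n -> 'cV[K]_n,
       linear_on_sym F -> range_compatible_sym F -> local_sym F).
Proof.
case: n hn => [|[|m]] // _.
split; [|split].
- move=> hch F hadd hrc.
  have h2 : (2%:R : K) != 0.
    by apply: contra hch => h; rewrite inE /= h.
  have [X [alpha [hrl hF]]] := only_if hadd hrc.
  exists X => M hM; rewrite hF // col0_alpha ?addr0 //; exact: rl_char hrl h2.
- move=> hch F; split.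
    by case=> hadd hrc; exact: only_if hadd hrc.
  case=> X [alpha [hrl hF]]; split.
    move=> A B hA hB; rewrite hF; last exact: symD. rewrite hF // hF //.
    by apply: add_form; case: hrl.
  move=> M hM; rewrite hF //; exact: (rc_form hch X hrl hM).
- case=> a [b [c [hab hac hbc]]] F [hadd hlin] hrc.
  have [X [alpha [hrl hF]]] := only_if hadd hrc.
  have [lam [h0 h1]] : exists lam : K, lam != 0 /\ lam != 1.
    case: (eqVneq a 0) => [ea|a0]; [subst a|].
      case: (eqVneq b 1) => [eb|b1]; [subst b|].
        exists c; split; [by rewrite eq_sym | by rewrite eq_sym].
      by exists b; split => //; rewrite eq_sym.
    case: (eqVneq a 1) => [ea|a1]; last by exists a.
    subst a; case: (eqVneq b 0) => [eb|b0]; [subst b|].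
      by exists c; split; rewrite eq_sym.
    by exists b; split => //; rewrite eq_sym.
  exists X => M hM; rewrite hF // col0_alpha ?addr0 //.
  exact: lin_alpha hrl hF hlin lam h0 h1.
Qed.
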